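(* Let $n,m,T\in\mathbb{N}$, $L\in[1,T]$, and $u_{[0,T-1]}\in\mathbb{R}^{mT}$. If $u_{[0,T-1]}$ is not persistently exciting of order $n+L$, then there exist a controllable pair $(A,B)\in\mathbb{R}^{n\times n}\times\mathbb{R}^{n\times m}$ and a state sequence $x_{[0,T-L]}$ with $x(t+1)=Ax(t)+Bu(t)$ for all $t\in[0,T-L-1]$ (i.e. $\begin{bmatrix}u_{[0,T-L]}\\ x_{[0,T-L]}\end{bmatrix}\in\mathfrak{B}_{T-L+1}(A,B)$), together with $v\in\mathbb{R}^{mL}$ and $w\in\mathbb{R}^n\setminus\{0\}$, such that $$\begin{bmatrix}v^\top & w^\top\end{bmatrix}\begin{bmatrix}\mathcal{H}_L(u_{[0,T-1]})\\ \mathcal{H}_1(x_{[0,T-L]})\end{bmatrix}=0.$$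
   Context: For integers $a\le b$, $[a,b]=\{c\in\mathbb{Z}: a\le c\le b\}$. For $v:\mathbb{Z}_+\to\mathbb{R}^q$, $v_{[0,T-1]}=\begin{bmatrix}v(0)^\top & \cdots & v(T-1)^\top\end{bmatrix}^\top$. For $k\in[1,T]$ the Hankel matrix of depth $k$ is the $qk\times(T-k+1)$ block matrix $\mathcal{H}_k(v_{[0,T-1]})$ whose $(i,j)$ block ($i\in[0,k-1]$, $j\in[0,T-k]$) is $v(i+j)$; in particular $\mathcal{H}_1(x_{[0,T-L]})=\begin{bmatrix}x(0)&\cdots&x(T-L)\end{bmatrix}$. The sequence $v_{[0,T-1]}$ is persistently exciting of order $k$ if $k\le T$ and $\mathcal{H}_k(v_{[0,T-1]})$ has full row rank (if $k>T$ it is not persistently exciting of order $k$). $\mathfrak{B}_k(A,B)$ denotes the set of stacked vectors $\begin{bmatrix}u_{[0,k-1]}\\ x_{[0,k-1]}\end{bmatrix}$ with $x(t+1)=Ax(t)+Bu(t)$ for $t\in[0,k-2]$. *)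

(* Defs.v *)
From HB Require Import structures.
From mathcomp Require Import all_boot all_order all_algebra.
Set Implicit Arguments. Unset Strict Implicit. Unset Printing Implicit Defensive.
Import Order.TTheory GRing.Theory Num.Theory.
Local Open Scope ring_scope.

Definition cvnth (R : nzRingType) (q : nat) (c : 'cV[R]_q) (i : nat) : R :=
  odflt 0 (omap (fun i' : 'I_q => c i' 0) (insub i)).

Definition mxnth (R : nzRingType) (p q : nat) (M : 'M[R]_(p, q)) (i j : nat) : R :=
  odflt 0 (omap (fun i' : 'I_p => odflt 0 (omap (fun j' : 'I_q => M i' j') (insub j)))
                (insub i)).

(* Hankel matrix with block depth k and N block columns of the signal v (blocks in R^q):
   block (i, j) (i < k, j < N) is v (i + j).  The Hankel matrix of depth k of
   v_[0,T-1] is  hankel q k (T - k + 1) v  (a (q k) x (T - k + 1) matrix). *)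
Definition hankel (R : nzRingType) (q k N : nat) (v : nat -> 'cV[R]_q) : 'M[R]_(q * k, N) :=
  \matrix_(r < q * k, j < N) cvnth (v (r %/ q + j)%N) (r %% q)%N.
Arguments hankel {R} q k N v.

Definition hankel1 (R : nzRingType) (n N : nat) (x : nat -> 'cV[R]_n) : 'M[R]_(n, N) :=
  \matrix_(i < n, j < N) x j i 0.
Arguments hankel1 {R} n N x.

Definition persistently_exciting (R : fieldType) (q : nat) (v : nat -> 'cV[R]_q)
  (T k : nat) : bool :=
  (k <= T)%N && row_free (hankel q k (T - k + 1)%N v).

(* Kalman controllability matrix [B  AB  ...  A^(n-1) B] (n x (n m)). *)
Definition ctrb_mx (R : nzRingType) (n m : nat) (A : 'M[R]_n) (B : 'M[R]_(n, m)) :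
  'M[R]_(n, n * m) :=
  \matrix_(i < n, c < n * m) mxnth (A ^+ (c %/ m)%N *m B) i (c %% m)%N.

Definition controllable (R : fieldType) (n m : nat) (A : 'M[R]_n) (B : 'M[R]_(n, m)) : bool :=
  \rank (ctrb_mx A B) == n.

(* Main.v *)
Require Import Defs.
From HB Require Import structures.
From mathcomp Require Import all_boot all_order all_algebra.
From mathcomp Require Import zify ring.
Import Order.TTheory GRing.Theory Num.Theory.
Set Implicit Arguments. Unset Strict Implicit. Unset Printing Implicit Defensive.
Local Open Scope ring_scope.

Definition ev (R : nzRingType) (p : {poly R}) (s : nat -> R) (j : nat) : R :=
  \sum_(i < size p) p`_i * s (j + i)%N.

Lemma ev_ge (R : nzRingType) (p : {poly R}) s j N : (size p <= N)%N ->
  ev p s j = \sum_(i < N) p`_i * s (j + i)%N.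
Proof.
move=> hN; rewrite /ev -!(big_mkord xpredT (fun i => p`_i * s (j+i)%N)).
rewrite (big_cat_nat (leq0n _) hN) /= [X in _ + X]big1_seq ?addr0 //.
move=> i /andP[_]; rewrite mem_index_iota => /andP[hi _].
by rewrite nth_default ?mul0r.
Qed.

Lemma ev_add (R : nzRingType) (p q : {poly R}) s j :
  ev (p + q) s j = ev p s j + ev q s j.
Proof.
rewrite (ev_ge _ _ (size_add p q)) (ev_ge _ _ (leq_maxl (size p) (size q))).
rewrite (ev_ge _ _ (leq_maxr (size p) (size q))) -big_split /=.
by apply: eq_bigr => i _; rewrite coefD mulrDl.
Qed.

Lemma ev_scale (R : comNzRingType) (a : R) (p : {poly R}) s j :
  ev (a *: p) s j = a * ev p s j.
Proof.
rewrite (ev_ge _ _ (size_scale_leq a p)) /ev mulr_sumr.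
by apply: eq_bigr => i _; rewrite coefZ mulrA.
Qed.

Lemma ev_opp (R : comNzRingType) (p : {poly R}) s j : ev (- p) s j = - ev p s j.
Proof. by rewrite -scaleN1r ev_scale mulN1r. Qed.

Lemma ev_C (R : nzRingType) (c : R) s j : ev c%:P s j = c * s j.
Proof.
by rewrite (ev_ge _ _ (size_polyC_leq1 c)) big_ord1 coefC /= addn0.
Qed.

Lemma ev_mulX (R : nzRingType) (p : {poly R}) s j : ev (p * 'X) s j = ev p s j.+1.
Proof.
have h : (size (p * 'X)%R <= (size p).+1)%N.
  by apply: leq_trans (size_mul_leq _ _) _; rewrite size_polyX addn2.
rewrite (ev_ge _ _ h) big_ord_recl /= coefMX eqxx mul0r add0r /ev.
by apply: eq_bigr => i _; rewrite coefMX /= addnS.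
Qed.

Lemma ev_XsubC (R : comNzRingType) (p : {poly R}) (c : R) s j :
  ev (p * ('X - c%:P)) s j = ev p s j.+1 - c * ev p s j.
Proof. by rewrite mulrBr ev_add ev_opp ev_mulX mulrC mul_polyC ev_scale. Qed.

Definition ap (R : nzRingType) m (Z : nat -> {poly R}) (u : nat -> 'cV[R]_m) j :=
  \sum_(c < m) ev (Z c) (fun t => u t c 0) j.

Definition Qp (R : fieldType) (lam : R) (z : nat -> {poly R}) (k c : nat) :=
  iter k (fun p => p %/ ('X - lam%:P)) (z c).

Lemma Qp_step (R : fieldType) (lam : R) z k c :
  Qp lam z k c = Qp lam z k.+1 c * ('X - lam%:P) + ((Qp lam z k c).[lam])%:P.
Proof. by rewrite /Qp iterS -modp_XsubC -divp_eq. Qed.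

Lemma ap_step (R : fieldType) m (lam : R) z k (u : nat -> 'cV[R]_m) j :
  ap (Qp lam z k) u j = ap (Qp lam z k.+1) u j.+1 - lam * ap (Qp lam z k.+1) u j
     + \sum_(c < m) (Qp lam z k c).[lam] * u j c 0.
Proof.
rewrite /ap mulr_sumr -sumrB -big_split /=; apply: eq_bigr => c _.
by rewrite {1}Qp_step ev_add ev_XsubC ev_C.
Qed.

Lemma Qp_size (R : fieldType) (lam : R) z k c :
  (size (Qp lam z k c) <= size (z c) - k)%N.
Proof.
elim: k => [|k IH]; first by rewrite subn0.
have q0 : ('X - lam%:P) != 0 by rewrite -size_poly_eq0 size_XsubC.
rewrite /Qp iterS size_divp // size_XsubC /= subnS -/(Qp lam z k c).
by rewrite -!subn1 leq_sub2r.
Qed.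

Lemma sum_sel (R : nzRingType) n (g : 'I_n -> R) (a : nat) :
  \sum_(k < n) (k == a :> nat)%:R * g k = odflt 0 (omap g (insub a)).
Proof.
case: insubP => [k Ha Hk|Ha] /=.
  rewrite (bigD1 k) //= Hk eqxx mul1r big1 ?addr0 // => k' nk.
  by rewrite -Hk (inj_eq val_inj) (negbTE nk) mul0r.
rewrite big1 // => k _; case: eqP => [E|_]; last by rewrite mul0r.
by move: Ha; rewrite -E ltn_ord.
Qed.

Lemma mxnth_ord (R : nzRingType) p q (M : 'M[R]_(p, q)) (i : 'I_p) (j : 'I_q) :
  mxnth M i j = M i j.
Proof. by rewrite /mxnth !valK. Qed.

Lemma mxnth_out (R : nzRingType) p q (M : 'M[R]_(p, q)) i j :
  (p <= i)%N -> mxnth M i j = 0.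
Proof. move=> h; rewrite /mxnth; have -> : insub i = None :> option 'I_p by apply: insubN; rewrite -leqNgt. by []. Qed.

Lemma cvnth_ord (R : nzRingType) q (c : 'cV[R]_q) (i : 'I_q) : cvnth c i = c i 0.
Proof. by rewrite /cvnth valK. Qed.

Lemma nonfree_ker (R : fieldType) p q (M : 'M[R]_(p, q)) :
  ~~ row_free M -> exists y : 'rV[R]_p, y != 0 /\ y *m M = 0.
Proof.
move=> nf.
have hk : kermx M != 0.
  apply/eqP => k0; move: (mxrank_ker M); rewrite k0 mxrank0 => /esym/eqP.
  rewrite subn_eq0 => h; move/negP: nf; apply.
  by rewrite /row_free eqn_leq rank_leq_row h.
have [i hi] : exists i, row i (kermx M) != 0.
  apply/existsP; move: hk; apply: contraR; rewrite negb_exists => /forallP h.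
  by apply/eqP/row_matrixP => i; rewrite row0; apply/eqP; move: (h i); rewrite negbK.
by exists (row i (kermx M)); split => //; rewrite -row_mul mulmx_ker row0.
Qed.

Lemma sum_divmod (R : nzRingType) m K (G : nat -> nat -> R) : (0 < m)%N ->
  \sum_(r < m * K) G (r %/ m)%N (r %% m)%N = \sum_(i < K) \sum_(c < m) G i c.
Proof.
move=> m0; elim: K => [|K IH]; first by rewrite muln0 !big_ord0.
rewrite big_ord_recr /= -IH -!(big_mkord xpredT (fun r => G (r %/ m)%N (r %% m)%N)) -(big_mkord xpredT (G K)).
have hle : (m * K <= m * K.+1)%N by rewrite leq_mul2l leqnSn orbT.
rewrite (big_cat_nat (leq0n (m * K)) hle) /=; congr (_ + _).
rewrite -{1}(add0n (m * K)%N) big_addn mulnS addnK.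
apply: eq_big_nat => c /andP[_ hc].
by rewrite addnC mulnC divnMDl // modnMDl divn_small // modn_small // addn0.
Qed.

Definition Smx (R : nzRingType) n : 'M[R]_n := \matrix_(i, k) (k == i.+1 :> nat)%:R.

Lemma S_mul (R : nzRingType) n p (M : 'M[R]_(n,p)) (i : 'I_n) (c : 'I_p) :
  (Smx R n *m M) i c = mxnth M i.+1 c.
Proof.
rewrite mxE; under eq_bigr => k _ do rewrite mxE.
rewrite (sum_sel (fun k => M k c)) /mxnth valK /=.
by case: insub.
Qed.

Lemma Spow_mul (R : nzRingType) n p (M : 'M[R]_(n,p)) k (i : 'I_n) (c : 'I_p) :
  (Smx R n ^+ k *m M) i c = mxnth M (i + k) c.
Proof.
elim: k i => [|k IH] i; first by rewrite expr0 mul1mx addn0 mxnth_ord.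
rewrite exprS -mulmxE -mulmxA S_mul.
case: (ltnP i.+1 n) => hi.
  by rewrite (mxnth_ord _ (Ordinal hi)) IH /= addSnnS.
by rewrite !mxnth_out //; apply: leq_trans hi _; rewrite -addSnnS leq_addr.
Qed.

Lemma shiftS (R : comNzRingType) n m (lam : R) (B : 'M[R]_(n, m)) h :
  forall y : 'rV[R]_n,
  (forall k, (k < h)%N -> y *m ((lam%:M + Smx R n) ^+ k *m B) = 0) ->
  forall k, (k < h)%N -> y *m (Smx R n ^+ k *m B) = 0.
Proof.
elim: h => [|h IH] y hy k hk //.
case: k hk => [|k] hk; first by have := hy 0%N hk; rewrite !expr0.
rewrite exprS -mulmxE -mulmxA (mulmxA y); apply: (IH (y *m Smx R n)) => // k' hk'.
have -> : y *m Smx R n = y *m (lam%:M + Smx R n) - lam *: y.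
  by rewrite mulmxDr mul_mx_scalar addrAC subrr add0r.
rewrite mulmxBl -scalemxAl -!mulmxA.
have e : (lam%:M + Smx R n) *m ((lam%:M + Smx R n) ^+ k' *m B) =
   (lam%:M + Smx R n) ^+ k'.+1 *m B by rewrite exprS -mulmxE mulmxA.
rewrite e (hy k'.+1) // (hy k') ?scaler0 ?subr0 //.
by apply: ltnW.
Qed.

Lemma ctrb_ok (R : fieldType) n m (lam : R) (B : 'M[R]_(n, m)) (i0 : 'I_n) (c0 : 'I_m) :
  val i0 = n.-1 -> B i0 c0 != 0 -> controllable (lam%:M + Smx R n) B.
Proof.
move=> hi0 hB; set A := lam%:M + Smx R n.
apply/negPn/negP => nf.
have [y [y0 hy]] := nonfree_ker nf.
have hk : forall k, (k < n)%N -> y *m (A ^+ k *m B) = 0.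
  move=> k hk; apply/rowP => c.
  have hr : (k * m + c < n * m)%N.
    have := ltn_ord c; have : (k.+1 <= n)%N := hk.
    move=> h1 h2; apply: (@leq_trans (k.+1 * m)); first by rewrite mulSn; lia.
    by rewrite leq_mul2r h1 orbT.
  have := congr1 (fun M : 'M[R]_(1, n * m) => M 0 (Ordinal hr)) hy; rewrite !mxE => h; rewrite -[in RHS]h.
  apply: eq_bigr => i _; congr (_ * _); rewrite [RHS]mxE /=.
  have m0 : (0 < m)%N by apply: leq_ltn_trans (ltn_ord c).
  rewrite divnMDl // modnMDl divn_small // modn_small // addn0.
  by rewrite mxnth_ord mxE.
have hS := shiftS hk.
move/negP: y0; apply; apply/eqP/rowP => i; rewrite mxE.
elim/ltn_ind: {i}(val i) {-2}i (erefl (val i)) => t IH i hit.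
have hkn : (n.-1 - i < n)%N by have := ltn_ord i; lia.
have := congr1 (fun M : 'M[R]_(1, m) => M 0 c0) (hS _ hkn); rewrite !mxE (bigD1 i) //= big1.
  rewrite addr0 Spow_mul.
  have -> : (i + (n.-1 - i))%N = i0 by rewrite hi0; have := ltn_ord i; lia.
  by rewrite mxnth_ord => /eqP; rewrite mulf_eq0 (negbTE hB) orbF => /eqP.
move=> l hl; rewrite Spow_mul.
case: (ltnP l i) => hli.
  by rewrite (IH l) ?mul0r // -hit.
rewrite mxnth_out ?mulr0 //.
have hne : val l <> val i by move=> e; move: hl; rewrite -(inj_eq val_inj) e eqxx.
move: hne hli; have := ltn_ord i; simpl; lia.
Qed.

Lemma exists_nonroot (R : realFieldType) (p : {poly R}) : p != 0 -> exists lam, p.[lam] != 0.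
Proof.
move=> p0; set rs := [seq i%:R | i <- iota 0 (size p)] : seq R.
have : ~~ all (root p) rs.
  apply/negP => hall; have := max_poly_roots p0 hall.
  rewrite map_inj_uniq ?iota_uniq; last by move=> a b /eqP; rewrite eqr_nat => /eqP.
  by move/(_ isT); rewrite size_map size_iota ltnn.
by case/allPn => x _ hx; exists x; rewrite -rootE.
Qed.

Fixpoint traj (R : nzRingType) n m (A : 'M[R]_n) (B : 'M[R]_(n, m)) (x0 : 'cV[R]_n)
  (u : nat -> 'cV[R]_m) (t : nat) : 'cV[R]_n :=
  match t with 0 => x0 | t'.+1 => A *m traj A B x0 u t' + B *m u t' end.

Lemma core (R : realFieldType) (n m T L : nat) (u : nat -> 'cV[R]_m)
  (z : nat -> {poly R}) (c0 : 'I_m) :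
  (0 < n)%N -> (forall c, size (z c) <= n + L)%N -> z c0 != 0 ->
  (forall j, (j + n <= T - L)%N -> ap z u j = 0) ->
  exists (A : 'M[R]_n) (B : 'M[R]_(n, m)) (x : nat -> 'cV[R]_n)
         (v : 'cV[R]_(m * L)) (w : 'cV[R]_n),
    [/\ controllable A B,
        (forall t : nat, (t < T - L)%N -> x t.+1 = A *m x t + B *m u t),
        w != 0 &
        row_mx v^T w^T *m col_mx (hankel m L (T - L + 1) u) (hankel1 n (T - L + 1) x) = 0].
Proof.
move=> n0 hsz zc0 hrel.
have [lam hlam] := exists_nonroot zc0.
set Q := Qp lam z.
set A := lam%:M + Smx R n.
set B : 'M[R]_(n, m) := \matrix_(i, c) (Q (n - i.+1)%N c).[lam].
set F := fun (i j : nat) => - ap (Q (n - i)%N) u j.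
set x0 : 'cV[R]_n := \col_(i < n) F i 0%N.
set xs := traj A B x0 u.
set v : 'cV[R]_(m * L) := \col_(r < m * L) (Q n (r %% m)%N)`_(r %/ m).
set w : 'cV[R]_n := \col_(i < n) (i == 0%N :> nat)%:R.
have claim : forall j (i : 'I_n), (i + j <= T - L)%N -> xs j i 0 = F i j.
  elim=> [|j IH] i hij; first by rewrite /xs /= mxE.
  rewrite /xs /= -/xs mulmxDl mul_scalar_mx !mxE.
  have hS := S_mul (xs j) i 0; rewrite mxE in hS; rewrite hS {hS}.
  under eq_bigr => c _ do rewrite mxE.
  have hin : (i < n)%N := ltn_ord i.
  have hF : F i j.+1 = lam * F i j + F i.+1 j + \sum_(c < m) (Q (n - i.+1)%N c).[lam] * u j c 0.
    rewrite /F; have := ap_step lam z (n - i.+1)%N u j.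
    rewrite subnSK // -/Q => ->; ring.
  rewrite hF IH; last by lia.
  congr (_ + _ + _).
  case: (ltnP i.+1 n) => hi.
    by rewrite (mxnth_ord _ (Ordinal hi)) IH //=; lia.
  rewrite mxnth_out // /F.
  have -> : (n - i.+1 = 0)%N by lia.
  by rewrite (hrel j) ?oppr0 //; lia.
exists A, B, xs, v, w; split.
- have i0 : (n.-1 < n)%N by rewrite prednK.
  apply: (@ctrb_ok _ _ _ lam B (Ordinal i0) c0) => //.
  by rewrite mxE /= prednK // subnn.
- by [].
- apply/eqP => /matrixP /(_ (Ordinal n0) 0); rewrite !mxE /=.
  by move/eqP; rewrite oner_eq0.
- have m0 : (0 < m)%N by apply: leq_ltn_trans (ltn_ord c0).
  rewrite mul_row_col; apply/matrixP => a j; rewrite !mxE.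
  under eq_bigr => r _ do rewrite !mxE.
  under [X in _ + X = _]eq_bigr => r _ do rewrite !mxE.
  rewrite (@sum_divmod _ m L (fun i c => (Q n c)`_i * cvnth (u (i + j)%N) c)) //.
  rewrite (sum_sel (fun i => xs j i 0)) (insubT (fun k => (k < n)%N) n0) /= claim /=; last by have := ltn_ord j; lia.
  rewrite /F subn0 exchange_big /= /ap ; apply/eqP; rewrite subr_eq0; apply/eqP.
  apply: eq_bigr => c _; rewrite (ev_ge _ _ (_ : size (Q n c) <= L)%N).
    by apply: eq_bigr => i _; rewrite cvnth_ord addnC.
  by apply: leq_trans (Qp_size _ _ _ _) _; rewrite leq_subLR.
Qed.

Theorem lemma1 (R : realFieldType) (n m T L : nat) (u : nat -> 'cV[R]_m) :
  (0 < n)%N -> (0 < m)%N -> (1 <= L <= T)%N ->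
  ~~ persistently_exciting u T (n + L) ->
  exists (A : 'M[R]_n) (B : 'M[R]_(n, m)) (x : nat -> 'cV[R]_n)
         (v : 'cV[R]_(m * L)) (w : 'cV[R]_n),
    [/\ controllable A B,
        (forall t : nat, (t < T - L)%N -> x t.+1 = A *m x t + B *m u t),
        w != 0 &
        row_mx v^T w^T *m col_mx (hankel m L (T - L + 1) u) (hankel1 n (T - L + 1) x) = 0].
Proof.
move=> n0 m0 /andP[L1 LT] npe.
case: (leqP (n + L) T) => hT; last first.
  pose z := fun c : nat => ((c == 0%N)%:R)%:P : {poly R}.
  apply: (@core _ _ _ _ _ u z (Ordinal m0)) => //.
  - by move=> c; apply: leq_trans (size_polyC_leq1 _) _; lia.
  - by rewrite /z /= polyC_eq0 oner_eq0.
  - by move=> j; lia.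
move: npe; rewrite /persistently_exciting hT /= => nf.
have [y [y0 hy]] := nonfree_ker nf.
pose z := fun c : nat => \poly_(i < n + L) mxnth y 0 (i * m + c)%N.
have [r hr] : exists r, y 0 r != 0.
  apply/existsP; move: y0; apply: contraR; rewrite negb_exists => /forallP h.
  by apply/eqP/rowP => r; rewrite mxE; apply/eqP; move: (h r); rewrite negbK.
have hrm : (r %% m < m)%N by rewrite ltn_pmod.
apply: (@core _ _ _ _ _ u z (Ordinal hrm)) => //.
- by move=> c; apply: size_poly.
- apply/eqP => /polyP /(_ (r %/ m)%N); rewrite coef_poly coef0 /=.
  have -> : (r %/ m < n + L)%N by rewrite ltn_divLR //; have := ltn_ord r; lia.
  by rewrite -divn_eq (mxnth_ord y 0 r); apply/eqP.
- move=> j hj.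
  have hj' : (j < T - (n + L) + 1)%N by lia.
  have := congr1 (fun M : 'M[R]_(1, _) => M 0 (Ordinal hj')) hy; rewrite !mxE => h.
  rewrite -[in RHS]h.
  under [in RHS]eq_bigr => r' _ do rewrite mxE -[y 0 r'](mxnth_ord y 0 r') [in X in mxnth y 0 X](divn_eq r' m).
  rewrite (@sum_divmod _ m (n + L) (fun i c => mxnth y 0 (i * m + c)%N * cvnth (u (i + j)%N) c)) //.
  rewrite exchange_big /ap; apply: eq_bigr => c _.
  rewrite (ev_ge _ _ (size_poly _ _)); apply: eq_bigr => i _.
  by rewrite coef_poly ltn_ord cvnth_ord (addnC j).
Qed.
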